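(* Let $a_1,\ldots,a_k$ be positive integers, $A=\sum_{j=1}^k a_j$, $n=k+2$, and $v=[4A+2;\,8a_1,\ldots,8a_k,\,1,\,1]$ (players $1,\ldots,n$). Let $v_{\&\{n-1,n\}}$ be the game in which player $n$ annexes player $n-1$, i.e. they are replaced by one player $\&\{n-1,n\}$ of weight $2$. Then $\beta_{\&\{n-1,n\}}(v_{\&\{n-1,n\}})>\beta_n(v)$ if and only if there is a set $P\subseteq\{1,\ldots,k\}$ with $\sum_{j\in P}a_j=\sum_{j\notin P}a_j$.
   Context: A weighted voting game $[q;w_1,\ldots,w_n]$ has players $1,\ldots,n$ with nonnegative weights $w_j$ and quota $q$, $0<q\le\sum_jw_j$; a coalition $S$ is winning iff $\sum_{j\in S}w_j\ge q$. Player $j$ is critical in $S$ if $S$ is winning and $S\setminus\{j\}$ is losing; $\eta_j$ is the number of coalitions in which $j$ is critical, and the Banzhaf index is $\beta_j=\eta_j/\sum_k\eta_k$. Merging a set $T$ of players yields the WVG with the same quota in which the players of $T$ are replaced by a single player $\&T$ of weight $\sum_{j\in T}w_j$. *)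

(* Defs.v *)
From HB Require Import structures.
From mathcomp Require Import all_boot all_order all_algebra.
Set Implicit Arguments. Unset Strict Implicit. Unset Printing Implicit Defensive.
Import Order.TTheory GRing.Theory Num.Theory.

Definition winning (n : nat) (q : nat) (w : 'I_n -> nat) (S : {set 'I_n}) : bool :=
  q <= \sum_(j in S) w j.

Definition critical (n : nat) (q : nat) (w : 'I_n -> nat) (j : 'I_n)
    (S : {set 'I_n}) : bool :=
  winning q w S && ~~ winning q w (S :\ j).

Definition eta (n : nat) (q : nat) (w : 'I_n -> nat) (j : 'I_n) : nat :=
  #|[set S : {set 'I_n} | critical q w j S]|.

Definition banzhaf (n : nat) (q : nat) (w : 'I_n -> nat) (j : 'I_n) : rat :=
  ((eta q w j)%:R / (\sum_(k < n) eta q w k)%:R)%R.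

(* Merging the last two players (n-1 and n, i.e. indices m and m+1 of 'I_(m+2))
   into a single player of weight w(n-1) + w(n), placed at index m of 'I_(m+1);
   the other players keep their weights (quota unchanged). *)
Definition merge_last2 (m : nat) (w : 'I_m.+2 -> nat) : 'I_m.+1 -> nat :=
  fun i => if unlift ord_max i is Some j
           then w (widen_ord (leqnSn _) (widen_ord (leqnSn _) j))
           else w (inord m) + w ord_max.

(* The game v = [4A+2; 8a_1,...,8a_k, 1, 1] on players 'I_(k+2). *)
Definition vweights (k : nat) (a : 'I_k -> nat) : 'I_k.+2 -> nat :=
  fun i => if (insub (val i) : option 'I_k) is Some j then 8 * a j else 1.

Definition vquota (k : nat) (a : 'I_k -> nat) : nat := 4 * (\sum_(j < k) a j) + 2.

(* Main.v *)
Require Import Defs.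
From mathcomp Require Import all_boot all_order all_algebra.
From Stdlib Require Import Lia.
Import Order.TTheory GRing.Theory Num.Theory.
Set Implicit Arguments. Unset Strict Implicit.

Ltac nlia := try apply/ssrnat.leP; repeat match goal with H : is_true (leq _ _) |- _ => move/ssrnat.leP: H end; rewrite -?multE -?plusE -?minusE; lia.

Lemma critE n q (w : 'I_n -> nat) j S :
  critical q w j S = [&& j \in S, q <= \sum_(i in S) w i & \sum_(i in S) w i < q + w j].
Proof.
rewrite /critical /winning.
case jS: (j \in S); last first.
  have -> : S :\ j = S.
    apply/setP=> i; rewrite !inE; case: (i =P j) => [->|] /=; by rewrite ?jS.
  by rewrite andbN.
rewrite (big_setD1 j jS) /= -ltnNge.
case: (q <= _) => //=. by rewrite addnC ltn_add2r.
Qed.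

Lemma insub_lt n i (H : i < n) : (insub i : option 'I_n) = Some (Ordinal H).
Proof. by rewrite insubT. Qed.

Lemma insub_ge n i : ~~ (i < n) -> (insub i : option 'I_n) = None.
Proof. by move=> H; rewrite insubF //; apply/negbTE. Qed.

Definition PS k (S : {set 'I_k.+2}) : {set 'I_k} := [set j | widen_ord (leqnSn _) (widen_ord (leqnSn _) j) \in S].
Definition PS' k (S : {set 'I_k.+1}) : {set 'I_k} := [set j | widen_ord (leqnSn _) j \in S].

Lemma Wv k (a : 'I_k -> nat) (S : {set 'I_k.+2}) :
  \sum_(i in S) vweights a i = 8 * \sum_(j in PS S) a j
     + (widen_ord (leqnSn _) (@ord_max k) \in S) + (ord_max \in S).
Proof.
rewrite big_mkcond big_ord_recr big_ord_recr /= big_distrr /= [in RHS]big_mkcond /=.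
rewrite /vweights /= !insub_ge ?ltnn ?ltnNge ?leqnSn //.
congr (_ + _ + _).
apply: eq_bigr => i _; rewrite inE.
rewrite (@insub_lt k i (ltn_ord i)).
by have -> : Ordinal (ltn_ord i) = i by apply: val_inj.
Qed.

Lemma vw_lt k (a : 'I_k -> nat) (i : 'I_k.+2) (j : 'I_k) : val i = val j -> vweights a i = 8 * a j.
Proof.
move=> e; rewrite /vweights e (@insub_lt k j (ltn_ord j)).
by have -> : Ordinal (ltn_ord j) = j by apply: val_inj.
Qed.

Lemma vw_ge k (a : 'I_k -> nat) (i : 'I_k.+2) : k <= i -> vweights a i = 1.
Proof. by move=> H; rewrite /vweights insub_ge // -leqNgt. Qed.

Lemma mw_lt k (a : 'I_k -> nat) (j : 'I_k) :
  merge_last2 (vweights a) (widen_ord (leqnSn _) j) = 8 * a j.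
Proof.
rewrite /merge_last2.
have -> : widen_ord (leqnSn _) j = lift ord_max j by apply: val_inj; rewrite /= /bump leqNgt ltn_ord.
by rewrite liftK; apply: vw_lt.
Qed.

Lemma mw_max k (a : 'I_k -> nat) : merge_last2 (vweights a) ord_max = 2.
Proof.
rewrite /merge_last2 unlift_none !vw_ge //= inordK //.
Qed.

Lemma Wm k (a : 'I_k -> nat) (S : {set 'I_k.+1}) :
  \sum_(i in S) merge_last2 (vweights a) i = 8 * \sum_(j in PS' S) a j + 2 * (ord_max \in S).
Proof.
rewrite big_mkcond big_ord_recr /= big_distrr /= [in RHS]big_mkcond /= mw_max.
congr (_ + _); last by case: (_ \in S).
apply: eq_bigr => i _; rewrite inE mw_lt; by case: (_ \in S).
Qed.

Definition F k (S : {set 'I_k.+1}) : {set 'I_k.+2} :=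
  [set i | if (insub (val i) : option 'I_k.+1) is Some i' then i' \in S else ord_max \in S].

Lemma inF k (S : {set 'I_k.+1}) (i : 'I_k.+2) (i' : 'I_k.+1) : val i = val i' -> (i \in F S) = (i' \in S).
Proof.
move=> e; rewrite inE e (@insub_lt k.+1 i' (ltn_ord i')).
by have -> : Ordinal (ltn_ord i') = i' by apply: val_inj.
Qed.

Lemma inF_max k (S : {set 'I_k.+1}) : (ord_max \in F S) = (ord_max \in S).
Proof. by rewrite inE insub_ge //= ltnn. Qed.

Lemma PS_F k (S : {set 'I_k.+1}) : PS (F S) = PS' S.
Proof. by apply/setP => j; rewrite [LHS]inE [RHS]inE; apply: inF. Qed.

Lemma W_F k (a : 'I_k -> nat) (S : {set 'I_k.+1}) :
  \sum_(i in F S) vweights a i = \sum_(i in S) merge_last2 (vweights a) i.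
Proof.
rewrite Wv Wm PS_F inF_max (@inF _ _ _ ord_max) //.
by rewrite -addnA mul2n -addnn.
Qed.

Lemma F_inj k : injective (@F k).
Proof.
move=> S1 S2 e; apply/setP => i.
by rewrite -(@inF _ S1 (widen_ord (leqnSn _) i)) // -(@inF _ S2 (widen_ord (leqnSn _) i)) // e.
Qed.

Lemma crit_j k (a : 'I_k -> nat) (j : 'I_k) (S : {set 'I_k.+1}) :
  critical (vquota a) (merge_last2 (vweights a)) (widen_ord (leqnSn _) j) S ->
  critical (vquota a) (vweights a) (widen_ord (leqnSn _) (widen_ord (leqnSn _) j)) (F S).
Proof.
rewrite !critE W_F (@inF _ _ _ (widen_ord (leqnSn _) j)) // mw_lt (@vw_lt _ _ _ j) //.
Qed.

Lemma crit_amp k (a : 'I_k -> nat) (S : {set 'I_k.+1}) :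
  critical (vquota a) (merge_last2 (vweights a)) ord_max S ->
  (ord_max \in S) /\ \sum_(i in S) merge_last2 (vweights a) i = vquota a.
Proof.
rewrite critE mw_max => /and3P [H1 H2 H3]; split => //.
move: H2 H3; rewrite Wm H1 /vquota /= => H2 H3; nlia.
Qed.

Lemma crit_n_of k (a : 'I_k -> nat) (S : {set 'I_k.+1}) :
  critical (vquota a) (merge_last2 (vweights a)) ord_max S ->
  critical (vquota a) (vweights a) ord_max (F S) &&
  critical (vquota a) (vweights a) (widen_ord (leqnSn _) ord_max) (F S).
Proof.
move/crit_amp => [H1 H2].
rewrite !critE W_F H2 inF_max (@inF _ _ _ ord_max) // H1 !vw_ge //= ?leqnn //.
by rewrite addn1 ltnSn.
Qed.

Lemma crit_n_to k (a : 'I_k -> nat) (S : {set 'I_k.+2}) :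
  critical (vquota a) (vweights a) ord_max S ->
  exists S', critical (vquota a) (merge_last2 (vweights a)) ord_max S' /\ F S' = S.
Proof.
rewrite critE vw_ge //= => /and3P [H1 H2 H3].
have Hk : widen_ord (leqnSn _) (@ord_max k) \in S.
  move: H2 H3; rewrite Wv H1 /vquota; case: (_ \in S) => //= H2 H3; nlia.
exists [set i : 'I_k.+1 | widen_ord (leqnSn _) i \in S].
have FS : F [set i : 'I_k.+1 | widen_ord (leqnSn _) i \in S] = S.
  apply/setP => i; case: (ltnP i k.+1) => Hi.
    rewrite (@inF _ _ _ (Ordinal Hi)) // inE.
    by have -> : widen_ord (leqnSn _) (Ordinal Hi) = i by apply: val_inj.
  have -> : i = ord_max by apply: val_inj; apply/eqP; rewrite eqn_leq Hi -ltnS ltn_ord.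
  by rewrite inF_max inE Hk H1.
split => //.
rewrite critE -W_F FS mw_max inE Hk H2 /=.
by apply: (leq_trans H3); rewrite leq_add2l.
Qed.

Lemma sum_split k (a : 'I_k -> nat) (P : {set 'I_k}) :
  \sum_(j < k) a j = \sum_(j in P) a j + \sum_(j in ~: P) a j.
Proof.
rewrite (bigID (mem P)) /=; congr (_ + _); apply: eq_bigl => j; by rewrite ?inE.
Qed.

Definition G k (P : {set 'I_k}) : {set 'I_k.+1} :=
  [set i : 'I_k.+1 | if (insub (val i) : option 'I_k) is Some j then j \in P else true].

Lemma PS'_G k (P : {set 'I_k}) : PS' (G P) = P.
Proof.
apply/setP => j; rewrite [LHS]inE inE /= (@insub_lt k j (ltn_ord j)).
by have -> : Ordinal (ltn_ord j) = j by apply: val_inj.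
Qed.

Lemma ar1 x y : 8*x + 2*1 = 4*(x+y)+2 -> x = y. Proof. nlia. Qed.
Lemma ar2 x : 4*(x+x)+2 <= 8*x + 2*1. Proof. nlia. Qed.
Lemma ar3 x : 8*x + 2*1 < 4*(x+x)+2+2. Proof. nlia. Qed.

Lemma ar4 x y z w u : x <= y -> z <= u -> 0 < w -> x + z < y + w + u. Proof. move=> H1 H2 H3; nlia. Qed.

Lemma amp_pos k (a : 'I_k -> nat) :
  0 < eta (vquota a) (merge_last2 (vweights a)) ord_max <->
  exists P : {set 'I_k}, \sum_(j in P) a j = \sum_(j in ~: P) a j.
Proof.
split.
  move/card_gt0P => [S]; rewrite inE => /crit_amp [H1 H2].
  exists (PS' S); move: H2; rewrite Wm H1 /vquota (sum_split a (PS' S)) /= => H2; exact: ar1 H2.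
move=> [P HP]; apply/card_gt0P; exists (G P); rewrite inE critE.
have Hm : ord_max \in G P by rewrite inE insub_ge //= ltnn.
rewrite Hm mw_max Wm Hm PS'_G /vquota (sum_split a P) HP /=.
apply/andP; split; nlia.
Qed.

Lemma eta_j_le k (a : 'I_k -> nat) (j : 'I_k) :
  eta (vquota a) (merge_last2 (vweights a)) (widen_ord (leqnSn _) j) <=
  eta (vquota a) (vweights a) (widen_ord (leqnSn _) (widen_ord (leqnSn _) j)).
Proof.
rewrite /eta -(card_imset _ (@F_inj k)); apply: subset_leq_card.
apply/subsetP => S /imsetP [S' H ->]; move: H; rewrite !inE; exact: crit_j.
Qed.

Lemma eta_amp_le k (a : 'I_k -> nat) :
  eta (vquota a) (merge_last2 (vweights a)) ord_max <= eta (vquota a) (vweights a) ord_max.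
Proof.
rewrite /eta -(card_imset _ (@F_inj k)); apply: subset_leq_card.
apply/subsetP => S /imsetP [S' H ->]; move: H; rewrite !inE => /crit_n_of /andP [] //.
Qed.

Lemma eta_n_le k (a : 'I_k -> nat) :
  eta (vquota a) (vweights a) ord_max <= eta (vquota a) (merge_last2 (vweights a)) ord_max.
Proof.
rewrite /eta; apply: (leq_trans _ (leq_imset_card (@F k) _)); apply: subset_leq_card.
apply/subsetP => S; rewrite inE => /crit_n_to [S' [H1 H2]]; apply/imsetP; exists S' => //.
by rewrite inE.
Qed.

Lemma eta_n1_pos k (a : 'I_k -> nat) :
  0 < eta (vquota a) (merge_last2 (vweights a)) ord_max ->
  0 < eta (vquota a) (vweights a) (widen_ord (leqnSn _) ord_max).
Proof.
move/card_gt0P => [S]; rewrite inE => /crit_n_of /andP [_ H].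
by apply/card_gt0P; exists (F S); rewrite inE.
Qed.

Unset Implicit Arguments.
Theorem mainTheorem9 (k : nat) (a : 'I_k -> nat) (apos : forall j, 0 < a j) :
  (banzhaf (vquota a) (merge_last2 (vweights a)) ord_max
     > banzhaf (vquota a) (vweights a) ord_max)%R
  <->
  exists P : {set 'I_k}, \sum_(j in P) a j = \sum_(j in ~: P) a j.
Proof.
rewrite -amp_pos /banzhaf.
set N' := eta (vquota a) (merge_last2 (vweights a)) ord_max.
set Nn := eta (vquota a) (vweights a) ord_max.
set D' := \sum_(i < k.+1) _.
set D := \sum_(i < k.+2) _.
split.
  case: (posnP N') => [->|//]; rewrite mul0r => H.
  by move: H; rewrite ltNge divr_ge0 ?ler0n.
move=> HN.
have HD' : (N' <= D')%N by rewrite /D' big_ord_recr /= leq_addl.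
have HDD : (D' < D)%N.
  rewrite /D' big_ord_recr /D big_ord_recr big_ord_recr /=.
  apply: ar4; [|exact: eta_amp_le|exact: eta_n1_pos].
  by apply: leq_sum => i _; apply: eta_j_le.
have HD : (0 < D)%N by apply: leq_ltn_trans HDD.
have HD'0 : (0 < D')%N by apply: leq_trans HD'.
rewrite ltr_pdivrMr ?ltr0n // mulrAC ltr_pdivlMr ?ltr0n // -!natrM ltr_nat.
apply: (@leq_ltn_trans (N' * D')); first by rewrite leq_mul2r eta_n_le orbT.
by rewrite ltn_pmul2l.
Qed.
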